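(* Let $r\ge0$ be an integer and $T\in\overline{\mathrm{Sub}}(X,1)$ with $T\subset B(1,r)$. Let $(\Delta_1,\tau_1),(\Delta_2,\tau_2)$ be $R_N$-core graphs, $(v_1,v_2)\in V(\Delta_1)\times V(\Delta_2)$, and $\Gamma$ the connected component of $\Delta_1\times_{R_N}\Delta_2$ containing $(v_1,v_2)$. Then there exists a based $R_N$-graph isomorphism $(T,1)\to(\Gamma,(v_1,v_2))$ if and only if $T_{r+1}(v_1)\cap T_{r+1}(v_2)=T$.
   Context: $N\ge2$, $F_N$ free with free basis $A$, $X$ its Cayley graph (tree with vertex set $F_N$, unit edge lengths, metric $d_X$), $B(1,r)$ the closed ball of radius $r$ about $1$, $R_N=F_N\backslash X$ the rose. An $R_N$-graph is a graph with a graph morphism $\tau$ to $R_N$; $R_N$-graph morphisms commute with these maps; subtrees of $X$ are $R_N$-graphs via the projection $X\to R_N$. An $R_N$-core graph is a finite $R_N$-graph with $\tau$ locally injective and no vertices of degree $0$ or $1$. $\overline{\mathrm{Sub}}(X,1)$: finite subtrees of $X$ containing $1$ (including $\{1\}$). For $m\ge1$, $\mathcal{R}_m$: finite subtrees $T'\ni1$ in which $1$ has degree $\ge2$ and all degree-one vertices are at distance exactly $m$ from $1$. A based occurrence $(T',1)\to(\Delta,v)$ is an $R_N$-graph morphism sending $1\mapsto v$ and preserving degrees of vertices of degree $\ge2$ in $T'$. For an $R_N$-core graph $\Delta$ and $v\in V(\Delta)$, $T_m(v)$ denotes the unique $T'\in\mathcal{R}_m$ admitting a based occurrence $(T',1)\to(\Delta,v)$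 (the $m$-neighborhood of $v$). The fiber product $\Delta_1\times_{R_N}\Delta_2$ has vertex set $V(\Delta_1)\times V(\Delta_2)$ and an edge labeled $a$ from $(o(e_1),o(e_2))$ to $(t(e_1),t(e_2))$ for each pair of edges $e_1,e_2$ with label $a$. *)

(* Defs.v *)
From HB Require Import structures.
From mathcomp Require Import all_boot.
Set Implicit Arguments. Unset Strict Implicit. Unset Printing Implicit Defensive.

(* A (finite) R_N-graph: vertices, oriented edges with origin/terminus, and
   the graph morphism tau to the rose R_N, recorded as the label in 'I_N of
   each edge (R_N has one vertex and N loops, one per basis element). *)
Record RNgraph (N : nat) := RGraph {
  vert : finType;
  edge : finType;
  src : edge -> vert;
  tgt : edge -> vert;
  lab : edge -> 'I_N }.

Section Graphs.
Variable N : nat.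
Implicit Types G H : RNgraph N.

(* degree of a vertex (a loop counts twice) *)
Definition deg G (v : vert G) : nat :=
  #|[pred e : edge G | src e == v]| + #|[pred e : edge G | tgt e == v]|.

Definition loc_inj G : Prop :=
  forall e e' : edge G, lab e = lab e' ->
    (src e = src e' -> e = e') /\ (tgt e = tgt e' -> e = e').

(* R_N-core graph (finiteness is built into RNgraph) *)
Definition core_graph G : Prop :=
  loc_inj G /\ forall v : vert G, 2 <= deg v.

Definition rmorph G H (fV : vert G -> vert H) (fE : edge G -> edge H) : Prop :=
  forall e : edge G,
    [/\ src (fE e) = fV (src e), tgt (fE e) = fV (tgt e) & lab (fE e) = lab e].

Definition riso G H (fV : vert G -> vert H) (fE : edge G -> edge H) : Prop :=
  [/\ rmorph fV fE, bijective fV & bijective fE].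

Definition fib_vert G H : finType := (vert G * vert H)%type.
Definition fib_edge G H : finType :=
  {p : (edge G * edge H)%type | lab p.1 == lab p.2}.
Definition fiber_product G H : RNgraph N :=
  @RGraph N (fib_vert G H) (fib_edge G H)
    (fun p => (src (val p).1, src (val p).2))
    (fun p => (tgt (val p).1, tgt (val p).2))
    (fun p => lab (val p).1).

Definition adj G : rel (vert G) := fun x y =>
  [exists e : edge G, ((src e == x) && (tgt e == y)) || ((src e == y) && (tgt e == x))].

Definition ind_vert G (S : pred (vert G)) : finType := {x : vert G | S x}.
Definition ind_edge G (S : pred (vert G)) : finType :=
  {t : (ind_vert S * ind_vert S * edge G)%type |
     (src t.2 == val t.1.1) && (tgt t.2 == val t.1.2)}.
Definition induced G (S : pred (vert G)) : RNgraph N :=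
  @RGraph N (ind_vert S) (ind_edge S)
    (fun t => (val t).1.1) (fun t => (val t).1.2) (fun t => lab (val t).2).

Definition component G (b : vert G) : RNgraph N :=
  induced (fun x => connect (@adj G) b x).

End Graphs.

(* a letter (i, true) is the basis element a_i, (i, false) is a_i^{-1};
   vertices of X = elements of F_N = reduced words. *)
Definition letter N : finType := ('I_N * bool)%type.
Definition word N := seq (letter N).

Definition inv_pair N (x y : letter N) : bool := (x.1 == y.1) && (x.2 != y.2).
Definition reduced N (w : word N) : bool := sorted (fun x y => ~~ inv_pair x y) w.

(* right multiplication of a reduced word by the basis element a_i
   (the Cayley graph has an a_i-labelled edge from g to g a_i) *)
Definition rmul N (w : word N) (i : 'I_N) : word N :=
  if last (i, true) w == (i, false) then take (size w).-1 w
  else rcons w (i, true).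

(* finite subtrees of X containing 1 (the set Sub-bar(X,1)); a subtree of a
   tree is determined by its vertex set, so it is given by a finite list of
   reduced words, containing the empty word and closed under prefixes *)
Definition subtreeX N (T : seq (word N)) : Prop :=
  [/\ forall w, w \in T -> reduced w,
      [::] \in T &
      forall w x, rcons w x \in T -> w \in T].

Definition tree_vert N (T : seq (word N)) : finType := seq_sub T.
Definition tree_edge N (T : seq (word N)) : finType :=
  {t : (tree_vert T * tree_vert T * 'I_N)%type |
     ssval t.1.2 == rmul (ssval t.1.1) t.2}.
Definition tree_graph N (T : seq (word N)) : RNgraph N :=
  @RGraph N (tree_vert T) (tree_edge T)
    (fun t => (val t).1.1) (fun t => (val t).1.2) (fun t => (val t).2).

Definition in_Rm N (m : nat) (T : seq (word N)) : Prop :=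
  [/\ subtreeX T,
      (forall x : vert (tree_graph T), ssval x = [::] -> 2 <= deg x) &
      (forall x : vert (tree_graph T), deg x = 1 -> size (ssval x) = m)].

Definition based_occurrence N (T : seq (word N)) (D : RNgraph N) (v : vert D) : Prop :=
  exists (fV : vert (tree_graph T) -> vert D) (fE : edge (tree_graph T) -> edge D),
    [/\ rmorph fV fE,
        (forall x, ssval x = [::] -> fV x = v) &
        (forall x, 2 <= deg x -> deg (fV x) = deg x)].

Definition is_Tm N (m : nat) (D : RNgraph N) (v : vert D) (T : seq (word N)) : Prop :=
  in_Rm m T /\ based_occurrence T v.

Definition in_ball N (r : nat) (T : seq (word N)) : Prop :=
  forall w, w \in T -> size w <= r.

Definition Gamma N (D1 D2 : RNgraph N) (v1 : vert D1) (v2 : vert D2) : RNgraph N :=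
  @component N (fiber_product D1 D2) ((v1, v2) : fib_vert D1 D2).

Definition based_iso_to_Gamma N (T : seq (word N)) (D1 D2 : RNgraph N)
    (v1 : vert D1) (v2 : vert D2) : Prop :=
  exists (fV : vert (tree_graph T) -> vert (Gamma v1 v2))
         (fE : edge (tree_graph T) -> edge (Gamma v1 v2)),
    riso fV fE /\ forall x, ssval x = [::] -> val (fV x) = (v1, v2).

(* Main.v *)
Require Import Defs.
From HB Require Import structures.
From mathcomp Require Import all_boot.
Set Implicit Arguments. Unset Strict Implicit. Unset Printing Implicit Defensive.

Section Words.
Variable N : nat.
Implicit Types (w : word N) (x y : letter N).

Definition linv (y : letter N) : letter N := (y.1, ~~ y.2).
Definition mulx w y : word N :=
  if last y w == linv y then take (size w).-1 w else rcons w y.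
Definition invw w : word N := rev (map linv w).

Lemma linv_inv y : linv (linv y) = y.
Proof. by case: y => a b; rewrite /linv /= negbK. Qed.

Lemma linv_neq y : (linv y == y) = false.
Proof. by case: y => a b; rewrite /linv xpair_eqE eqxx /=; case: b. Qed.

Lemma linv_eq x y : (linv x == linv y) = (x == y).
Proof.
by case: x => a b; case: y => c d; rewrite /linv !xpair_eqE /=; case: b; case: d.
Qed.

Lemma linv_pairE x y : @Defs.inv_pair N x y = (y == linv x).
Proof.
by case: x => a b; case: y => c d; rewrite /Defs.inv_pair /linv !xpair_eqE /= eq_sym;
  case: b; case: d; rewrite ?andbT ?andbF.
Qed.

Lemma reduced_rcons w y :
  reduced (rcons w y) = reduced w && (last y w != linv y).
Proof.
case: w => [|a w] /=; first by rewrite eq_sym linv_neq.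
rewrite /reduced /= rcons_path linv_pairE.
congr (_ && ~~ _).
by rewrite -(linv_eq y) linv_inv eq_sym.
Qed.

Lemma reduced_cons a w : reduced (a :: w) = reduced w && (head a w != linv a).
Proof.
case: w => [|b w] /=; first by rewrite eq_sym linv_neq.
by rewrite /reduced /= linv_pairE andbC.
Qed.

Lemma reduced_cat w1 w2 : reduced (w1 ++ w2) ->
  reduced w1 /\ reduced w2.
Proof. by move/cat_sorted2 => []. Qed.

Lemma mulx_cancel w y : last y w = linv y ->
  w = rcons (mulx w y) (linv y).
Proof.
case/lastP: w => [|w a] /=; first by move=> h; exfalso; move: (linv_neq y); rewrite -h eqxx.
rewrite last_rcons => ->; rewrite /mulx last_rcons eqxx size_rcons /=.
by rewrite -cats1 take_cat ltnn subnn take0 cats0 ?cats1.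
Qed.

Lemma mulx_nc w y : last y w != linv y -> mulx w y = rcons w y.
Proof. by rewrite /mulx => /negbTE ->. Qed.

Lemma mulx_reduced w y : reduced w -> reduced (mulx w y).
Proof.
move=> rw; case: (boolP (last y w == linv y)) => [/eqP h|h].
  by move: rw; rewrite {1}(mulx_cancel h) reduced_rcons => /andP[].
by rewrite mulx_nc // reduced_rcons rw.
Qed.

Lemma mulxK w y : reduced w -> mulx (mulx w y) (linv y) = w.
Proof.
move=> rw; case: (boolP (last y w == linv y)) => [/eqP h|h].
  have e := mulx_cancel h.
  set w0 := mulx w y in e *.
  rewrite [RHS]e; move: rw; rewrite e reduced_rcons => /andP[_ h2].
  by rewrite mulx_nc.
rewrite (mulx_nc h) /mulx last_rcons linv_inv eqxx size_rcons /=.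
by rewrite -cats1 take_cat ltnn subnn take0 cats0 ?cats1.
Qed.

Lemma mulx_rcons w y : reduced (rcons w y) -> mulx w y = rcons w y.
Proof. by rewrite reduced_rcons => /andP[_ h]; rewrite mulx_nc. Qed.

Lemma size_mulx w y : size (mulx w y) <= (size w).+1.
Proof.
rewrite /mulx; case: ifP => _; last by rewrite size_rcons.
by rewrite size_take; case: ifP => // _; case: (size w) => //= n; rewrite ltnW.
Qed.

Lemma invw_rcons w y : invw (rcons w y) = linv y :: invw w.
Proof. by rewrite /invw map_rcons rev_rcons. Qed.

Lemma invw_cons w y : invw (y :: w) = rcons (invw w) (linv y).
Proof. by rewrite /invw /= rev_cons. Qed.

Lemma invw_cat w1 w2 : invw (w1 ++ w2) = invw w2 ++ invw w1.
Proof. by rewrite /invw map_cat rev_cat. Qed.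

Lemma size_invw w : size (invw w) = size w.
Proof. by rewrite /invw size_rev size_map. Qed.

Lemma reduced_invw w : reduced w -> reduced (invw w).
Proof.
move=> rw; rewrite /reduced /invw rev_sorted sorted_map.
apply: sub_sorted rw => a b /=.
by rewrite !linv_pairE linv_inv eq_sym.
Qed.

End Words.

Lemma mulx_rcons_inv N (p : word N) a : reduced (rcons p a) -> mulx (rcons p a) (linv a) = p.
Proof.
move=> h; have rp : reduced p by move: h; rewrite reduced_rcons => /andP[].
by rewrite -(mulx_rcons h) mulxK.
Qed.

Section Graph.
Variable N : nat.
Variable G : RNgraph N.
Implicit Types (w : word N) (y : letter N) (u z c : vert G).

Definition endp (e : edge G) (b : bool) := if b then src e else tgt e.
Definition othp (e : edge G) (b : bool) := if b then tgt e else src e.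

Definition step u y : option (vert G) :=
  omap (fun e => othp e y.2) [pick e | (endp e y.2 == u) && (lab e == y.1)].

Definition read u w : option (vert G) :=
  foldl (fun o y => obind (fun z => step z y) o) (Some u) w.

Lemma foldl_None w :
  foldl (fun o y => obind (fun z => step z y) o) None w = None.
Proof. by elim: w. Qed.

Lemma read_nil u : read u [::] = Some u. Proof. by []. Qed.

Lemma read_rcons u w y : read u (rcons w y) = obind (fun z => step z y) (read u w).
Proof. by rewrite /read foldl_rcons. Qed.

Lemma read_cat u w1 w2 : read u (w1 ++ w2) = obind (fun z => read z w2) (read u w1).
Proof.
rewrite /read foldl_cat; case: (foldl _ _ w1) => [z|] //=.
by rewrite foldl_None.
Qed.

Lemma read_cons u y w : read u (y :: w) = obind (fun z => read z w) (step u y).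
Proof. by rewrite -cat1s read_cat. Qed.

Lemma read_catP u w1 w2 c : read u (w1 ++ w2) = Some c ->
  exists z, read u w1 = Some z /\ read z w2 = Some c.
Proof. by rewrite read_cat; case: (read u w1) => // z /= h; exists z. Qed.

Lemma stepS u y z : step u y = Some z ->
  exists e, [/\ endp e y.2 = u, lab e = y.1 & othp e y.2 = z].
Proof.
rewrite /step; case: pickP => //= e /andP[/eqP h1 /eqP h2] [<-].
by exists e.
Qed.

Hypothesis li : loc_inj G.

Lemma endp_inj e e' b : lab e = lab e' -> endp e b = endp e' b -> e = e'.
Proof. by move=> hl; case: b => /=; have [h1 h2] := li hl. Qed.

Lemma othp_inj e e' b : lab e = lab e' -> othp e b = othp e' b -> e = e'.
Proof. by move=> hl; case: b => /=; have [h1 h2] := li hl. Qed.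

Lemma stepP e y : lab e = y.1 -> step (endp e y.2) y = Some (othp e y.2).
Proof.
move=> hl; rewrite /step; case: pickP => [e' /andP[/eqP h1 /eqP h2]|] /=.
  by rewrite (endp_inj (etrans h2 (esym hl)) h1).
by move/(_ e); rewrite eqxx hl eqxx.
Qed.

Lemma step_back u y z : step u y = Some z -> step z (linv y) = Some u.
Proof.
case/stepS => e [h1 h2 h3].
have := @stepP e (linv y) h2.
by rewrite /linv /=; case: (y.2) h1 h3 => /= -> ->.
Qed.

Lemma step_fun u u' y z : step u y = Some z -> step u' y = Some z -> u = u'.
Proof.
move=> /step_back h /step_back h'; by rewrite h in h'; case: h'.
Qed.

Lemma read_back u w y c : read u (rcons w y) = Some c -> read u w = step c (linv y).
Proof.
rewrite read_rcons; case: (read u w) => //= z /step_back ->. done.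
Qed.

Lemma read_inv u w c : read u w = Some c -> read c (invw w) = Some u.
Proof.
elim/last_ind: w c => [|w y IH] c /=; first by case=> ->.
move=> h; rewrite invw_rcons read_cons -(read_back h).
move: h; rewrite read_rcons; case e: (read u w) => [z|] //= _.
by rewrite (IH z e).
Qed.

Lemma read_mulx b w y c : reduced w -> read b w = Some c ->
  read b (mulx w y) = step c y.
Proof.
move=> rw h; case: (boolP (last y w == linv y)) => [/eqP hl|hl].
  have e := mulx_cancel hl.
  by move: h; rewrite {1}e => /read_back ->; rewrite linv_inv.
by rewrite mulx_nc // read_rcons h.
Qed.

Lemma read_fun u u' w c : read u w = Some c -> read u' w = Some c -> u = u'.
Proof. by move=> /read_inv h /read_inv h'; rewrite h in h'; case: h'. Qed.

Definition Ls u : {set letter N} := locked [set y | step u y != None].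

Lemma LsE u y : (y \in Ls u) = (step u y != None).
Proof. by rewrite /Ls -lock inE. Qed.

Lemma LsP u y : reflect (exists e, endp e y.2 = u /\ lab e = y.1) (y \in Ls u).
Proof.
rewrite LsE; apply: (iffP idP).
  by case h: step => [z|] // _; case/stepS: h => e [? ? _]; exists e.
by case=> e [<- h]; rewrite (stepP h).
Qed.

Lemma deg_Ls u : deg u = #|Ls u|.
Proof.
rewrite /deg -(cardsID [set y : letter N | y.2] (Ls u)).
have -> : #|[pred e : edge G | src e == u]| =
          #|[set (lab e, true) | e in [pred e : edge G | src e == u]]|.
  rewrite card_in_imset // => e e' /eqP h1 /eqP h2 [h3].
  by apply: (@endp_inj _ _ true h3); rewrite /= h1 h2.
have -> : #|[pred e : edge G | tgt e == u]| =
          #|[set (lab e, false) | e in [pred e : edge G | tgt e == u]]|.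
  rewrite card_in_imset // => e e' /eqP h1 /eqP h2 [h3].
  by apply: (@endp_inj _ _ false h3); rewrite /= h1 h2.
have -> : [set (lab e, true) | e in [pred e : edge G | src e == u]] =
          Ls u :&: [set y | y.2].
  apply/setP => -[i b]; rewrite !inE /=.
  apply/imsetP/andP => [[e he [-> ->]]|[/LsP [e [h1 h2]] hb]].
    by split => //; apply/LsP; exists e; split => //=; apply/eqP.
  move: h1 h2 => /= h1 h2; exists e; first by rewrite inE -h1 hb.
  by rewrite h2 hb.
have -> : [set (lab e, false) | e in [pred e : edge G | tgt e == u]] =
          Ls u :\: [set y | y.2].
  apply/setP => -[i b]; rewrite !inE /=.
  apply/imsetP/andP => [[e he [-> ->]]|[hb /LsP [e [h1 h2]]]].
    by split => //; apply/LsP; exists e; split => //=; apply/eqP.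
  move: h1 h2 => /= h1 h2; exists e; first by rewrite inE -h1 (negbTE hb).
  by rewrite h2 (negbTE hb).
done.
Qed.

End Graph.

Section Morph.
Variable N : nat.
Variables G H : RNgraph N.
Variables (fV : vert G -> vert H) (fE : edge G -> edge H).
Hypothesis mf : rmorph fV fE.
Hypothesis liH : loc_inj H.

Lemma morph_step u y z : step u y = Some z -> step (fV u) y = Some (fV z).
Proof.
case/stepS => e [h1 h2 h3].
have [s1 t1 l1] := mf e.
have := @stepP _ _ liH (fE e) y (etrans l1 h2).
by case: (y.2) h1 h3 => /= <- <-; rewrite ?s1 ?t1.
Qed.

Lemma morph_read u w z : read u w = Some z -> read (fV u) w = Some (fV z).
Proof.
elim/last_ind: w z => [|w y IH] z; first by case=> <-.
rewrite !read_rcons; case h: (read u w) => [z'|] //= hs.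
by rewrite (IH _ h) /= (morph_step hs).
Qed.

Lemma morph_Ls u : Ls u \subset Ls (fV u).
Proof.
apply/subsetP => y; rewrite !LsE.
by case h: step => [z|] // _; rewrite (morph_step h).
Qed.

End Morph.

Section Tree.
Variable N : nat.
Variable T : seq (word N).
Hypothesis hT : subtreeX T.
Notation TG := (tree_graph T).

Lemma tree_red (x : vert TG) : reduced (ssval x).
Proof. by case: hT => h _ _; apply: h; exact: ssvalP. Qed.

Lemma ss_inj (x y : vert TG) : ssval x = ssval y -> x = y.
Proof. exact: val_inj. Qed.

Lemma tree_li : loc_inj TG.
Proof.
move=> [[[s t] i] hh] [[[s' t'] i'] hh'] /= hl; subst i'.
have /= h := eqP hh; have /= h' := eqP hh'.
split => hs.
  subst s'; have ett : t = t' by apply: ss_inj; rewrite h h'.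
  by subst t'; apply: val_inj.
subst t'.
have ess : s = s'.
  apply: ss_inj; rewrite -(mulxK (i, true) (tree_red s)).
  by rewrite -(mulxK (i, true) (tree_red s')); congr mulx; exact: (etrans (esym h) h').
by subst s'; apply: val_inj.
Qed.

Lemma tree_step (x : vert TG) y z : step x y = Some z -> ssval z = mulx (ssval x) y.
Proof.
case/stepS => -[[[s t] i] hh] []; have /= h := eqP hh.
case: y => j [] /= <- <- <- /=; first by [].
rewrite h -[rmul _ _]/(mulx _ (i, true)).
by rewrite -[(i, false)]/(linv (i, true)) mulxK // tree_red.
Qed.

Lemma tree_step_in (x : vert TG) y (h : mulx (ssval x) y \in T) :
  step x y = Some (SeqSub h).
Proof.
case: y h => i [] h.
  have he : ssval (SeqSub h) == rmul (ssval x) i by [].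
  exact: (@stepP _ _ tree_li (exist _ (x, SeqSub h, i) he) (i, true)).
have he : ssval x == rmul (ssval (SeqSub h)) i.
  by rewrite /= -[rmul _ _]/(mulx _ (i, true)) -[(i, true)]/(linv (i, false)) mulxK ?tree_red.
exact: (@stepP _ _ tree_li (exist _ (SeqSub h, x, i) he) (i, false)).
Qed.

Lemma tree_LsE (x : vert TG) y : (y \in Ls x) = (mulx (ssval x) y \in T).
Proof.
rewrite LsE; apply/idP/idP.
  by case e: step => [z|] // _; rewrite -(tree_step e) ssvalP.
by move=> h; rewrite (tree_step_in h).
Qed.

Lemma tree_read (x0 : vert TG) : ssval x0 = [::] ->
  forall x : vert TG, read x0 (ssval x) = Some x.
Proof.
move=> h0.
suff H : forall w (h : w \in T), read x0 w = Some (SeqSub h).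
  by case=> w h; rewrite H.
elim/last_ind => [|w y IH] h.
  by rewrite read_nil; congr Some; apply: ss_inj.
have hw : w \in T by case: hT => _ _; apply; exact: h.
have rw : reduced (rcons w y) by case: hT => hr _ _; exact: hr.
rewrite read_rcons (IH hw) /=.
have hm : mulx (ssval (SeqSub hw)) y \in T by rewrite /= mulx_rcons.
by rewrite (tree_step_in hm); congr Some; apply: ss_inj; rewrite /= mulx_rcons.
Qed.

Lemma morph_tree_read (H : RNgraph N) fV fE (mf : @rmorph N TG H fV fE)
  (liH : loc_inj H) (x0 : vert TG) : ssval x0 = [::] ->
  forall x, read (fV x0) (ssval x) = Some (fV x).
Proof. by move=> h0 x; apply: (morph_read mf liH); exact: tree_read. Qed.

Lemma tree_deg (x : vert TG) : deg x = #|Ls x|.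
Proof. exact: (deg_Ls tree_li). Qed.

End Tree.

Section Tm.
Variable N : nat.
Variable D : RNgraph N.
Hypothesis hD : core_graph D.
Variable m : nat.
Variable v : vert D.

Lemma Tm_char T1 : is_Tm m v T1 ->
  forall w, (w \in T1) = [&& reduced w, size w <= m & read v w != None].
Proof.
case=> -[hsub hroot hleaf] [fV [fE [mf hv hdeg]]].
have liD : loc_inj D by case: hD.
have hsub' := hsub; case: hsub' => hred hnil hpre.
pose x0 : vert (tree_graph T1) := SeqSub hnil.
have hrd : forall x, read v (ssval x) = Some (fV x).
  by move=> x; rewrite -(hv x0 erefl); apply: (morph_tree_read hsub mf liD).
have hsz : forall x : vert (tree_graph T1), size (ssval x) <= m.
  case: (@arg_maxnP _ x0 predT (fun x => size (ssval x)) isT) => xm _ hmax.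
  move=> x; apply: leq_trans (hmax x isT) _.
  case/lastP e: (ssval xm) => [//|p a].
  have rpa : reduced (rcons p a) by rewrite -e; apply: hred; exact: ssvalP.
  rewrite -e; suff -> : size (ssval xm) = m by []; apply: hleaf.
  rewrite tree_deg //; apply/eqP/cards1P; exists (linv a); apply/setP => y.
  rewrite tree_LsE // inE e.
  case: (eqVneq y (linv a)) => [->|ne].
    by rewrite mulx_rcons_inv // (hpre p a) // -e ssvalP.
  rewrite mulx_nc ?last_rcons; last by rewrite -(linv_eq a) linv_inv eq_sym.
  apply/negbTE/negP => hin.
  have := hmax (SeqSub hin) isT; rewrite /= e !size_rcons.
  by rewrite ltnn.
move=> w; apply/idP/idP.
  move=> hw; have := hsz (SeqSub hw); have := hrd (SeqSub hw) => /= -> ->.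
  by rewrite hred.
elim/last_ind: w => [|u y IH]; first by rewrite hnil.
case/and3P => hr hs hre.
have ru : reduced u by move: hr; rewrite reduced_rcons => /andP[].
have hu : u \in T1.
  apply: IH; rewrite ru (leq_trans _ hs) ?size_rcons //=.
  by move: hre; rewrite read_rcons; case: (read v u).
pose xu : vert (tree_graph T1) := SeqSub hu.
have dxu : 2 <= deg xu.
  have [e0|[p [a e]]] : u = [::] \/ exists p a, u = rcons p a.
    by case/lastP: (u) => [|p a]; [left|right; exists p, a].
    by apply: hroot; rewrite /= e0.
  rewrite tree_deg //.
  have ha : linv a \in Ls xu.
    rewrite tree_LsE //= e mulx_rcons_inv -?e //.
    by apply: (hpre p a); rewrite -e.
  have : 0 < #|Ls xu| by apply/card_gt0P; exists (linv a).
  rewrite leq_eqVlt eq_sym; case: ltngtP => // h1 _.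
  have := hleaf xu; rewrite tree_deg // -h1 => /(_ erefl) /= hm.
  by move: hs; rewrite size_rcons hm ltnn.
have eL : Ls xu = Ls (fV xu).
  apply/eqP; rewrite eqEcard (morph_Ls mf liD) /=.
  by rewrite -(deg_Ls liD) -tree_deg // hdeg.
have : y \in Ls xu.
  rewrite eL LsE; have := hrd xu; rewrite /= => hu'.
  by move: hre; rewrite read_rcons hu'.
by rewrite tree_LsE //= mulx_rcons.
Qed.

End Tm.

Section Canon.
Variable N : nat.

Definition allw (k : nat) : seq (word N) :=
  flatten [seq [seq tval t | t <- enum {: j.-tuple (letter N)}] | j <- iota 0 k.+1].

Lemma mem_allw k w : (w \in allw k) = (size w <= k).
Proof.
apply/flattenP/idP => [[s /mapP [j hj ->] /mapP [t _ ->]]|hw].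
  by move: hj; rewrite mem_iota size_tuple add0n ltnS => /andP[].
exists [seq tval t | t <- enum {: (size w).-tuple (letter N)}].
  by apply/mapP; exists (size w) => //; rewrite mem_iota add0n ltnS.
by apply/mapP; exists (in_tuple w); rewrite ?mem_enum.
Qed.

Variable D : RNgraph N.
Hypothesis hD : core_graph D.
Variable m : nat.
Hypothesis hm : 0 < m.
Variable v : vert D.

Definition canonT : seq (word N) :=
  [seq w <- allw m | reduced w && (read v w != None)].

Lemma mem_canonT w :
  (w \in canonT) = [&& reduced w, size w <= m & read v w != None].
Proof. by rewrite mem_filter mem_allw; case: (reduced w) (size w <= m) (read v w != None) => [] [] []. Qed.

Lemma canonT_is_Tm : is_Tm m v canonT.
Proof.
have liD : loc_inj D by case: hD.
have hsub : subtreeX canonT.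
  split.
  - by move=> w; rewrite mem_canonT => /and3P[].
  - by rewrite mem_canonT.
  - move=> w x; rewrite !mem_canonT reduced_rcons size_rcons read_rcons.
    case/and3P => /andP[-> _] /ltnW -> /=.
    by case: (read v w).
pose fV (x : vert (tree_graph canonT)) := odflt v (read v (ssval x)).
have hfV : forall x, read v (ssval x) = Some (fV x).
  move=> x; have := ssvalP x; rewrite mem_canonT => /and3P[_ _].
  by rewrite /fV; case: (read v _).
have hszx : forall x : vert (tree_graph canonT), size (ssval x) <= m.
  by move=> x; have := ssvalP x; rewrite mem_canonT => /and3P[].
have hLs : forall x : vert (tree_graph canonT), size (ssval x) < m ->
    Ls x = Ls (fV x).
  move=> x hx; apply/setP => y.
  rewrite tree_LsE // LsE mem_canonT mulx_reduced ?tree_red //=.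
  rewrite (leq_trans (size_mulx _ _) hx) /=.
  by rewrite (read_mulx liD y (tree_red hsub x) (hfV x)).
have hLm : forall x : vert (tree_graph canonT), size (ssval x) = m ->
    #|Ls x| <= 1.
  move=> x hx.
  case/lastP e: (ssval x) hx => [|p a] hx; first by move: hm; rewrite -hx.
  rewrite -(cards1 (linv a)); apply: subset_leq_card; apply/subsetP => y.
  rewrite tree_LsE // mem_canonT inE => /and3P[_ hs _].
  apply/negPn/negP => ne; move: hs.
  rewrite e mulx_nc ?last_rcons; last by rewrite -(linv_eq a) linv_inv eq_sym.
  by rewrite -hx !size_rcons ltnn.
have hdeg2 : forall x : vert (tree_graph canonT), 2 <= deg x -> size (ssval x) < m.
  move=> x; rewrite tree_deg // => h2; rewrite ltn_neqAle hszx andbT.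
  by apply/eqP => he; have := hLm x he; rewrite leqNgt h2.
split; first split => //.
- move=> x hx; rewrite tree_deg // hLs ?hx // -(deg_Ls liD).
  by case: hD => _; apply.
- move=> x hx; apply/eqP; rewrite eqn_leq hszx /=; apply: contraT; rewrite -ltnNge => hlt.
  move: hx; rewrite tree_deg // hLs // -(deg_Ls liD) => h.
  by case: hD => _ /(_ (fV x)); rewrite h.
have hfE : forall t : edge (tree_graph canonT), exists e : edge D,
    [&& src e == fV (src t), tgt e == fV (tgt t) & lab e == lab t].
  move=> [[[x z] i] /= hh].
  have := hfV z; rewrite (eqP hh) -[rmul _ _]/(mulx _ (i, true)).
  rewrite (read_mulx liD _ (tree_red hsub x) (hfV x)).
  by case/stepS => e [/= h1 h2 h3]; exists e; rewrite h1 h2 h3 !eqxx.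
exists fV, (fun t => xchoose (hfE t)); split.
- by move=> t; have /and3P[/eqP -> /eqP -> /eqP ->] := xchooseP (hfE t).
- by move=> x hx; have := hfV x; rewrite hx read_nil; case.
- by move=> x /hdeg2 hx; rewrite tree_deg // hLs // (deg_Ls liD).
Qed.

End Canon.

Section Fiber.
Variable N : nat.
Variables D1 D2 : RNgraph N.
Hypothesis l1 : loc_inj D1.
Hypothesis l2 : loc_inj D2.
Notation F := (fiber_product D1 D2).

Lemma fib_li : loc_inj F.
Proof.
move=> [[e1 e2] hh] [[e1' e2'] hh'] /= hl.
have /= h := eqP hh; have /= h' := eqP hh'.
have hl2 : lab e2 = lab e2' by rewrite -h -h'.
have [a1 b1] := l1 hl; have [a2 b2] := l2 hl2.
split => -[s1 s2].
  by apply: val_inj; rewrite /= (a1 s1) (a2 s2).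
by apply: val_inj; rewrite /= (b1 s1) (b2 s2).
Qed.

Definition pstep (o1 : option (vert D1)) (o2 : option (vert D2)) : option (vert F) :=
  match o1, o2 with Some x, Some z => Some ((x, z) : fib_vert D1 D2) | _, _ => None end.

Lemma fib_step a b y : step (G := F) ((a, b) : fib_vert D1 D2) y = pstep (step a y) (step b y).
Proof.
case h: (step (G := F) _ y) => [[a' b']|].
  case/stepS: h => -[[e1 e2] hh] [].
  case: y => i [] /= [h1 h2] h3 [h4 h5].
    have h6 : lab e2 = i by rewrite -(eqP hh).
    have := @stepP _ _ l1 e1 (i, true) h3; have := @stepP _ _ l2 e2 (i, true) h6.
    by rewrite /= h1 h2 h4 h5 => -> ->.
  have h6 : lab e2 = i by rewrite -(eqP hh).
  have := @stepP _ _ l1 e1 (i, false) h3; have := @stepP _ _ l2 e2 (i, false) h6.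
  by rewrite /= h1 h2 h4 h5 => -> ->.
case e1: (step a y) => [a'|] //; case e2: (step b y) => [b'|] //=.
case/stepS: e1 => f1 [h1 h2 h3]; case/stepS: e2 => f2 [k1 k2 k3].
have hh : lab (f1, f2).1 == lab (f1, f2).2 by rewrite /= h2 k2.
have := @stepP _ _ fib_li (exist _ (f1, f2) hh) y h2.
move=> hs; move: h.
by case: (y.2) h1 k1 hs => /= <- <- ->.
Qed.

Lemma fib_read a b w : read (G := F) ((a, b) : fib_vert D1 D2) w = pstep (read a w) (read b w).
Proof.
elim/last_ind: w => [|w y IH] //.
rewrite !read_rcons IH.
case: (read a w) => [x|] //; case: (read b w) => [z|] /=; last by case: (step x y).
exact: fib_step.
Qed.

Lemma fib_readable a b w :
  (read (G := F) ((a, b) : fib_vert D1 D2) w != None) =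
  (read a w != None) && (read b w != None).
Proof. by rewrite fib_read; case: (read a w) => [x|]; case: (read b w). Qed.

End Fiber.

Section Cyc.
Variable N : nat.
Implicit Types (w g h c s t : word N) (x y a : letter N).

Lemma reduced_rcons_cat s x t :
  reduced (rcons s x ++ t) = reduced (rcons s x) && reduced (x :: t).
Proof.
case: s => [|a s] /=; first by [].
by rewrite /reduced /= cat_path last_rcons.
Qed.

Lemma cyc_word g : reduced g -> g != [::] ->
  exists h c, [/\ g = h ++ c ++ invw h, c != [::] & reduced (c ++ c)].
Proof.
move: {2}(size g) (leqnn (size g)) => n; elim: n g => [|n IH] g.
  by rewrite leqn0 size_eq0 => /eqP -> _; rewrite eqxx.
move=> hs rg ng.
case: (boolP (reduced (g ++ g))) => hgg.
  by exists [::], g; rewrite /= cats0.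
case: g hs rg ng hgg => [//|a t] hs rg _ hgg.
case/lastP: t hs rg hgg => [|u z] hs rg hgg.
  by move: hgg; rewrite /= /reduced /= linv_pairE eq_sym linv_neq.
have hz : z = linv a.
  apply/eqP; apply: contraNT hgg => hz.
  rewrite -[a :: rcons u z]/(rcons (a :: u) z) reduced_rcons_cat.
  rewrite [X in X && _]rg reduced_cons [rcons (a :: u) z]/= rg /=.
  by rewrite -(linv_eq a) linv_inv eq_sym.
subst z.
move: rg; rewrite reduced_cons => /andP[rur hh].
clear hgg; case: u hs hh rur => [|b u] hs hh rur.
  by move: hh; rewrite /= eqxx.
have rbu : reduced (b :: u) by move: rur; rewrite reduced_rcons => /andP[].
have hs' : size (b :: u) <= n by move: hs; rewrite /= size_rcons !ltnS => /ltnW.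
have [h [c [e hc rcc]]] := IH (b :: u) hs' rbu isT.
exists (a :: h), c; split => //.
by rewrite e /= invw_cons -!rcons_cat.
Qed.

End Cyc.

Section Inj.
Variable N : nat.
Variable G : RNgraph N.
Hypothesis li : loc_inj G.
Variable b : vert G.
Variable K : nat.
Hypothesis hbound : forall w, reduced w -> read b w != None -> size w <= K.

Lemma no_loop g : reduced g -> g != [::] -> read b g = Some b -> False.
Proof.
move=> rg ng hg.
have [h [c [e hc rcc]]] := cyc_word rg ng.
move: hg; rewrite e => /read_catP [z' [hh /read_catP [z'' [hc' hinv]]]].
have hz : z'' = z' by apply: (read_fun li hinv); exact: (read_inv li hh).
subst z''.
case/lastP: c e hc rcc hc' => [//|c0 x] e _ rcc hc'.
set c := rcons c0 x in e rcc hc' *.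
pose f := fun s : word N => s ++ c.
have Hr : forall k, read z' (iter k f c) = Some z'.
  by elim=> [//|k IHk]; rewrite /= /f read_cat IHk.
have Hs : forall k, k < size (iter k f c).
  elim=> [|k IHk]; first by rewrite /c size_rcons.
  by rewrite /= /f size_cat -addn1 leq_add // /c size_rcons.
have rhc : reduced (h ++ c).
  by move: e rg => ->; rewrite catA => /cat_sorted2 [].
have rxc : reduced (x :: c).
  by move: rcc; rewrite /c reduced_rcons_cat => /andP[].
have Hred : forall k, reduced (h ++ iter k f c).
  elim=> [//|k IHk].
  rewrite /= /f catA.
  have [s' es] : exists s', h ++ iter k f c = rcons s' x.
    case: k {IHk} => [|k] /=; first by exists (h ++ c0); rewrite /c rcons_cat.
    by exists (h ++ iter k f c ++ c0); rewrite /f /c !rcons_cat.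
  by rewrite es reduced_rcons_cat -es IHk.
have := hbound (Hred K).
rewrite read_cat hh /= Hr /= => /(_ isT).
by rewrite size_cat leqNgt ltn_addl // Hs.
Qed.

Lemma read_inj w1 w2 c : reduced w1 -> reduced w2 ->
  read b w1 = Some c -> read b w2 = Some c -> w1 = w2.
Proof.
move=> r1 r2 h1 h2; apply/eqP/negPn/negP => ne.
move: {2}(size w1 + size w2) (leqnn (size w1 + size w2)) => n.
elim: n w1 w2 c r1 r2 h1 h2 ne => [|n IH] w1 w2 c r1 r2 h1 h2 ne hs.
  by move: hs ne; rewrite leqn0 addn_eq0 !size_eq0 => /andP[/eqP -> /eqP ->].
case/lastP E1: w1 r1 h1 ne hs => [|u1 y1] r1 h1 ne hs.
  apply: (@no_loop (invw w2)); first exact: reduced_invw.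
    by rewrite -size_eq0 size_invw size_eq0 eq_sym.
  by move: h1; rewrite read_nil => -[hc]; move: h2; rewrite -hc => h2; exact: (read_inv li h2).
case/lastP E2: w2 r2 h2 ne hs => [|u2 y2] r2 h2 ne hs.
  by apply: (@no_loop (rcons u1 y1)) => //; rewrite ?h1 -?h2 // -size_eq0 size_rcons.
case: (eqVneq y1 y2) => [ey|ney].
  subst y2.
  have := read_back li h1; have := read_back li h2.
  case e1: (read b u1) => [z|]; last by move: h1; rewrite read_rcons e1.
  move=> h2' h1'; rewrite -h1' in h2'.
  apply: (IH u1 u2 z) => //.
  - by move: r1; rewrite reduced_rcons => /andP[].
  - by move: r2; rewrite reduced_rcons => /andP[].
  - by apply: contraNneq ne => ->.
  - by move: hs; rewrite !size_rcons addSn addnS ltnS => /ltnW.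
apply: (@no_loop (rcons u1 y1 ++ invw (rcons u2 y2))).
- have := reduced_invw r2; rewrite invw_rcons => hr.
  rewrite reduced_rcons_cat r1 reduced_cons hr /=.
  by rewrite linv_eq eq_sym.
- by case: u1 {E1 r1 h1 ne hs IH}.
- by rewrite read_cat h1 /= (read_inv li h2).
Qed.

End Inj.

Lemma inj_surj_bij (A B : finType) (f : A -> B) :
  injective f -> (forall y, exists x, f x == y) -> bijective f.
Proof.
move=> fi fs; exists (fun y => xchoose (fs y)).
  by move=> x; apply: fi; exact/eqP/(xchooseP (fs (f x))).
by move=> y; exact/eqP/(xchooseP (fs y)).
Qed.

Section Comp.
Variable N : nat.
Variable G : RNgraph N.
Hypothesis li : loc_inj G.
Variable b : vert G.

Lemma step_adj z y c : step z y = Some c -> @adj N G z c.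
Proof.
case/stepS => e [h1 h2 h3]; apply/existsP; exists e.
by case: (y.2) h1 h3 => /= -> ->; rewrite !eqxx ?orbT.
Qed.

Lemma adj_step z c : @adj N G z c -> exists y, step z y = Some c.
Proof.
case/existsP => e /orP[/andP[/eqP h1 /eqP h2]|/andP[/eqP h1 /eqP h2]].
  by exists (lab e, true); rewrite -h1 -h2 (@stepP _ _ li e (lab e, true)).
by exists (lab e, false); rewrite -h1 -h2 (@stepP _ _ li e (lab e, false)).
Qed.

Lemma read_connect w c : read b w = Some c -> connect (@adj N G) b c.
Proof.
elim/last_ind: w c => [|w y IH] c; first by case=> <-; exact: connect0.
rewrite read_rcons; case e: (read b w) => [z|] //= hs.
by apply: connect_trans (IH _ e) (connect1 (step_adj hs)).
Qed.

Lemma connect_read c : connect (@adj N G) b c ->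
  exists w, reduced w /\ read b w = Some c.
Proof.
case/connectP => p hp ->.
suff : forall p x, path (@adj N G) x p ->
    (exists w, reduced w /\ read b w = Some x) ->
    exists w, reduced w /\ read b w = Some (last x p).
  by move=> /(_ p b hp); apply; exists [::].
elim=> [|z q IH] x /=; first by move=> _.
move=> /andP[hxz hq] [w [rw hw]]; apply: IH => //.
have [y hy] := adj_step hxz.
by exists (mulx w y); rewrite mulx_reduced // (read_mulx li y rw hw).
Qed.

Notation C := (component b).

Lemma comp_li : loc_inj C.
Proof.
move=> [[[s t] e] hh] [[[s' t'] e'] hh'] /= hl.
have /andP[/eqP h1 /eqP h2] := hh; have /andP[/eqP h1' /eqP h2'] := hh'.
have [a1 a2] := li hl.
split => hs.
  subst s'; have ee := a1 (etrans h1 (esym h1')); subst e'.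
  have et : t = t' by apply: val_inj; rewrite -h2 -h2'.
  by subst t'; apply: val_inj.
subst t'; have ee := a2 (etrans h2 (esym h2')); subst e'.
have es : s = s' by apply: val_inj; rewrite -h1 -h1'.
by subst s'; apply: val_inj.
Qed.

Variable r : nat.
Variable T : seq (word N).
Hypothesis hT : subtreeX T.
Hypothesis hTr : in_ball r T.

Lemma comp_iso_iff :
  (exists (fV : vert (tree_graph T) -> vert C) (fE : edge (tree_graph T) -> edge C),
     riso fV fE /\ forall x, ssval x = [::] -> val (fV x) = b) <->
  (forall w, reduced w -> size w <= r.+1 -> (read b w != None) = (w \in T)).
Proof.
have hnil : [::] \in T by case: hT.
pose x0 : vert (tree_graph T) := SeqSub hnil.
split.
  case=> fV [fE [[mf [gV fVK gVK] [gE fEK gEK]] hroot]].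
  have mg : rmorph (fun x => val (fV x)) (fun t => (val (fE t)).2).
    move=> t; have [s1 t1 l1] := mf t.
    move: (fE t) s1 t1 l1 => [[[s u] e] hh] /= <- <- <-.
    by have /andP[/eqP -> /eqP ->] := hh.
  have hrd : forall x, read b (ssval x) = Some (val (fV x)).
    by move=> x; have := morph_tree_read hT mg li (x0 := x0) erefl x; rewrite /= (hroot x0 erefl).
  move=> w; elim/last_ind: w => [|u y IH] rw hs.
    by rewrite hnil.
  apply/idP/idP => [hre|hw]; last first.
    by have := hrd (SeqSub hw) => /= ->.
  have ru : reduced u by move: rw; rewrite reduced_rcons => /andP[].
  have hu : u \in T.
    rewrite -IH //; last by move: hs; rewrite size_rcons => /ltnW.
    by move: hre; rewrite read_rcons; case: (read b u).
  pose xu : vert (tree_graph T) := SeqSub hu.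
  have hxu := hrd xu; rewrite /= in hxu.
  move: hre; rewrite read_rcons hxu /=.
  case hst: (step _ y) => [c'|] // _.
  have hcc : connect (@adj N G) b c'.
    by apply: (@read_connect (rcons u y)); rewrite read_rcons hxu.
  case/stepS: hst => e [h1 h2 h3].
  have hcs : connect (@adj N G) b (src e).
    by move: h1 h3; case: (y.2) => /= h1 h3; [rewrite h1; exact: valP | rewrite h3].
  have hct : connect (@adj N G) b (tgt e).
    by move: h1 h3; case: (y.2) => /= h1 h3; [rewrite h3 | rewrite h1; exact: valP].
  have hee : (src e == val (exist _ (src e) hcs : vert C)) &&
             (tgt e == val (exist _ (tgt e) hct : vert C)) by rewrite !eqxx.
  pose eC : edge C := exist _ (exist _ (src e) hcs, exist _ (tgt e) hct, e) hee.
  pose t := gE eC.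
  have ft : fE t = eC by rewrite /t gEK.
  have [s1 t1 l1] := mf t.
  rewrite ft /= in s1 t1 l1.
  have lt : lab t = y.1 by exact: (etrans (esym l1) h2).
  have ht : endp t y.2 = xu.
    rewrite -[endp t _]fVK -[xu]fVK; congr gV; apply: val_inj.
    by case: (y.2) h1 => /= h1;
      [apply: (etrans (esym (f_equal val s1))) | apply: (etrans (esym (f_equal val t1)))];
      exact: h1.
  have := tree_step hT (@stepP _ _ (tree_li hT) t y lt).
  rewrite ht /= mulx_rcons // => <-.
  exact: ssvalP.
move=> H.
have hTw : forall w, w \in T -> reduced w /\ size w <= r.
  by move=> w hw; split; [case: hT => h _ _; exact: h | exact: hTr].
have hb : forall w, reduced w -> read b w != None -> size w <= r.
  move=> w rw hw; rewrite leqNgt; apply/negP => hlt.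
  have e := cat_take_drop r.+1 w.
  have rt : reduced (take r.+1 w) by move: rw; rewrite -{1}e => /cat_sorted2 [].
  have st : size (take r.+1 w) = r.+1 by rewrite size_takel.
  have rdt : read b (take r.+1 w) != None.
    by move: hw; rewrite -{1}e read_cat; case: (read b _).
  move: rdt; rewrite H ?st // => /hTw [_].
  by rewrite st ltnn.
have hinT : forall w, reduced w -> read b w != None -> w \in T.
  by move=> w rw hw; rewrite -H // (leq_trans (hb w rw hw)).
have hTread : forall w, w \in T -> read b w != None.
  by move=> w hw; have [rw sw] := hTw w hw; rewrite H // (leq_trans sw).
have exV : forall x : vert (tree_graph T), exists c : vert C,
    read b (ssval x) == Some (val c).
  move=> x; have := hTread _ (ssvalP x).
  case e: (read b (ssval x)) => [c0|] // _.
  by exists (exist _ c0 (read_connect e)).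
pose fV x := xchoose (exV x).
have hfV : forall x, read b (ssval x) = Some (val (fV x)).
  by move=> x; apply/eqP; exact: (xchooseP (exV x)).
have exE : forall t : edge (tree_graph T), exists e : edge C,
    [&& src e == fV (src t), tgt e == fV (tgt t) & lab e == lab t].
  move=> [[[x z] i] hh] /=.
  have := hfV z; rewrite (eqP hh) -[rmul _ _]/(mulx _ (i, true)).
  rewrite (read_mulx li _ (tree_red hT x) (hfV x)).
  case/stepS => e0 [/= h1 h2 h3].
  have hee : (src e0 == val (fV x)) && (tgt e0 == val (fV z)) by rewrite h1 h3 !eqxx.
  by exists (exist _ (fV x, fV z, e0) hee); rewrite /= h2 !eqxx.
pose fE t := xchoose (exE t).
have hfE : forall t, [/\ src (fE t) = fV (src t), tgt (fE t) = fV (tgt t) &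
                         lab (fE t) = lab t].
  by move=> t; have /and3P[/eqP -> /eqP -> /eqP ->] := xchooseP (exE t).
have fVi : injective fV.
  move=> x x' e; apply: (ss_inj (T := T)).
  apply: (read_inj li hb (tree_red hT x) (tree_red hT x') (hfV x)).
  by rewrite hfV e.
have fVs : forall c, exists x, fV x == c.
  move=> c; have [w [rw hw]] := connect_read (valP c).
  have hw' : w \in T by apply: hinT; rewrite ?hw.
  exists (SeqSub hw'); apply/eqP/val_inj.
  by have := hfV (SeqSub hw'); rewrite /= hw => -[].
exists fV, fE; split; last first.
  by move=> x hx; have := hfV x; rewrite hx read_nil => -[].
split.
- by move=> t; have [-> -> ->] := hfE t.
- exact: inj_surj_bij.
apply: inj_surj_bij.
  move=> t t' e.
  have [s1 t1 l1] := hfE t; have [s1' t1' l1'] := hfE t'.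
  have es : src t = src t' by apply: fVi; rewrite -s1 -s1' e.
  have et : tgt t = tgt t' by apply: fVi; rewrite -t1 -t1' e.
  have el : lab t = lab t' by rewrite -l1 -l1' e.
  move: t t' es et el {s1 t1 l1 s1' t1' l1' e} => [[[x z] i] hh] [[[x' z'] i'] hh'] /= ex ez ei.
  by apply: val_inj; rewrite /= ex ez ei.
move=> eC.
have [x /eqP ex] := fVs (src eC).
pose e0 := (val eC).2.
have h1 : src e0 = val (src eC) by have /andP[/eqP h _] := valP eC.
have hz : read b (mulx (ssval x) (lab e0, true)) = Some (tgt e0).
  rewrite (read_mulx li _ (tree_red hT x) (hfV x)) ex -h1.
  exact: (@stepP _ _ li e0 (lab e0, true) erefl).
have hzT : mulx (ssval x) (lab e0, true) \in T.
  by apply: hinT; rewrite ?mulx_reduced ?tree_red ?hz.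
have htt : ssval (SeqSub hzT) == rmul (ssval x) (lab e0) by exact: eqxx.
exists (exist _ (x, SeqSub hzT, lab e0) htt); apply/eqP.
have [s1 t1 l1] := hfE (exist _ (x, SeqSub hzT, lab e0) htt).
by apply: (proj1 (comp_li l1)); rewrite s1 /= ex.
Qed.

End Comp.
Unset Implicit Arguments. Set Strict Implicit.

Theorem mainTheorem12 (N : nat) (hN : 2 <= N) (r : nat) (T : seq (word N))
    (hT : subtreeX T) (hTr : in_ball r T)
    (D1 D2 : RNgraph N) (hD1 : core_graph D1) (hD2 : core_graph D2)
    (v1 : vert D1) (v2 : vert D2) :
  (exists T1 T2, is_Tm r.+1 v1 T1 /\ is_Tm r.+1 v2 T2) /\
  (forall T1 T2 : seq (word N), is_Tm r.+1 v1 T1 -> is_Tm r.+1 v2 T2 ->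
     (based_iso_to_Gamma T v1 v2 <->
      forall w : word N, (w \in T1) && (w \in T2) = (w \in T))).
Proof.
split.
  exists (canonT (r.+1) v1), (canonT (r.+1) v2).
  by split; apply: canonT_is_Tm.
move=> T1 T2 h1 h2.
have l1 : loc_inj D1 by case: hD1.
have l2 : loc_inj D2 by case: hD2.
have liF := fib_li l1 l2.
have E := comp_iso_iff liF ((v1, v2) : fib_vert D1 D2) hT hTr.
rewrite /based_iso_to_Gamma /Gamma.
split => [/E H w|H]; last apply/E => w.
  rewrite (Tm_char hD1 h1) (Tm_char hD2 h2).
  case rw: (reduced w); case sw: (size w <= r.+1) => /=.
  - by rewrite -H // fib_readable.
  - apply/esym/negbTE/negP => hw; move: sw; rewrite (leq_trans (hTr w hw)) //.
  - by apply/esym/negbTE/negP => hw; move: rw; case: hT => ->.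
  - by apply/esym/negbTE/negP => hw; move: rw; case: hT => ->.
move=> rw sw.
have := H w; rewrite (Tm_char hD1 h1) (Tm_char hD2 h2) rw sw /= => e.
by rewrite (fib_readable l1 l2).
Qed.
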